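(* Let $n$ be a positive integer and let $A(n)=(a_{ij})_{i,j\in\mathbb{N}}$ be the greedy matrix described in the context. For each $j\geq 1$ let $f(j)$ be the smallest $i$ such that $a_{ij}=1$. Then $f$ is monotonically increasing, i.e. $f(j)\le f(k)$ whenever $1\le j<k$.
   Context: $\mathbb{N}=\{1,2,3,\dots\}$. Fix a positive integer $n$. The infinite $\{0,1\}$-matrix $A(n)=(a_{ij})_{i,j\in\mathbb{N}}$ is defined recursively. Its entries are determined row by row (row $1$ first), and within each row from left to right, so that $a_{kl}$ is determined after all $a_{ij}$ with $i<k$ and all $a_{kj}$ with $j<l$. One sets $a_{kl}=1$ if and only if all of the following hold: (1) $\sum_{j<l}a_{kj}<n+1$; (2) $\sum_{i<k}a_{il}<n+1$; (3) there is no pair $(i,j)$ with $1\le i<k$, $1\le j<l$ and $a_{ij}=a_{il}=a_{kj}=1$. Otherwise $a_{kl}=0$. *)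

(* Defs.v *)
From mathcomp Require Import all_boot.
Set Implicit Arguments. Unset Strict Implicit. Unset Printing Implicit Defensive.

(* Indices are 1-based; entries with index 0 are false.
   [P] is the (already determined) matrix of rows 1..k-1, [s] the already
   determined prefix of row k (s`_(j-1) = a_{kj} for j < l). *)
Definition greedy_entry (n : nat) (P : nat -> nat -> bool) (k l : nat)
    (s : seq bool) : bool :=
  [&& count id s < n.+1,                                  (* (1) *)
      count (fun i => P i l) (iota 1 k.-1) < n.+1          (* (2) *)
    &
      ~~ has (fun i => has (fun j => [&& P i j, P i l & nth false s j.-1])
                           (iota 1 l.-1))
             (iota 1 k.-1)].                               (* (3) *)

Fixpoint greedy_row_prefix (n : nat) (P : nat -> nat -> bool) (k l : nat)
    : seq bool :=
  match l with
  | 0 => [::]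
  | l'.+1 => let s := greedy_row_prefix n P k l' in
             rcons s (greedy_entry n P k l'.+1 s)
  end.

(* greedy_rows n k i j = a_{ij} if 1 <= i <= k, and false otherwise *)
Fixpoint greedy_rows (n k : nat) : nat -> nat -> bool :=
  match k with
  | 0 => fun _ _ => false
  | k'.+1 => let P := greedy_rows n k' in
             fun i j => if i <= k' then P i j
                        else if (i == k'.+1) && (0 < j)
                             then nth false (greedy_row_prefix n P k'.+1 j) j.-1
                             else false
  end.

Definition a (n i j : nat) : bool := greedy_rows n i i j.

(* Main.v *)
Require Import Defs.
From mathcomp Require Import all_boot.

Lemma rows_stable n k i j : i <= k -> greedy_rows n k i j = greedy_rows n i i j.
Proof.
elim: k => [|k IH] Hi; first by rewrite leqn0 in Hi; move/eqP: Hi => ->.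
case: (leqP i k) => Hik.
  by rewrite /= Hik IH.
have -> : i = k.+1 by apply/eqP; rewrite eqn_leq Hi Hik.
by [].
Qed.

Lemma grp_size n P k l : size (greedy_row_prefix n P k l) = l.
Proof. by elim: l => [|l IH] //=; rewrite size_rcons IH. Qed.

Lemma grp_take n P k l m : m <= l ->
  take m (greedy_row_prefix n P k l) = greedy_row_prefix n P k m.
Proof.
elim: l => [|l IH] Hm; first by rewrite leqn0 in Hm; move/eqP: Hm => ->.
case: (leqP m l) => Hml.
  rewrite /= -cats1 take_cat grp_size.
  case: (ltnP m l) => H; first by rewrite IH.
  have Eml : m = l by apply/eqP; rewrite eqn_leq Hml H.
  by rewrite Eml subnn take0 cats0.
have -> : m = l.+1 by apply/eqP; rewrite eqn_leq Hm Hml.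
by rewrite take_oversize // grp_size.
Qed.

Lemma grp_nth n P k l m : m < l ->
  nth false (greedy_row_prefix n P k l) m =
  greedy_entry n P k m.+1 (greedy_row_prefix n P k m).
Proof.
move=> Hm.
rewrite -(nth_take _ (ltnSn m)) grp_take //= nth_rcons grp_size ltnn eqxx //.
Qed.

Lemma a_entry n i j : 0 < j ->
  a n i.+1 j = greedy_entry n (greedy_rows n i) i.+1 j
                 (greedy_row_prefix n (greedy_rows n i) i.+1 j.-1).
Proof.
move=> Hj.
rewrite /a /= ltnn eqxx Hj /=.
case: j Hj => [|j] // _.
by rewrite grp_nth.
Qed.

Theorem lemma3p3 (n : nat) (f : nat -> nat) :
  0 < n ->
  (forall j, 1 <= j ->
     [/\ 1 <= f j, a n (f j) j & forall i, 1 <= i -> a n i j -> f j <= i]) ->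
  forall j k, 1 <= j -> j < k -> f j <= f k.
Proof.
move=> _ Hf j k Hj Hjk.
have Hk : 1 <= k by apply: leq_trans Hjk; apply: leq_trans Hj _.
case: (Hf j Hj) => _ _ Hmin.
case: (Hf k Hk) => Hfk Hak _.
case: (leqP (f j) (f k)) => // Hlt.
have Hzero : forall x, 1 <= x -> x < f j -> a n x j = false.
  move=> x Hx Hxj; apply/negP => Ha.
  by have := Hmin x Hx Ha; rewrite leqNgt Hxj.
have : a n (f k) j.
  move: Hak Hfk Hlt Hzero.
  case: (f k) => [|i] // Hak _ Hlt Hzero.
  have HP : forall x, x \in iota 1 i -> greedy_rows n i x j = false.
    move=> x; rewrite mem_iota => /andP [Hx1 Hx2].
    rewrite add1n ltnS in Hx2.
    rewrite rows_stable //; apply: Hzero => //.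
    by apply: leq_ltn_trans Hlt; exact: leq_trans Hx2 (leqnSn i).
  rewrite a_entry //.
  rewrite a_entry // in Hak.
  move: Hak; rewrite /greedy_entry /= => /and3P [H1 _ _].
  apply/and3P; split.
  - apply: leq_ltn_trans H1.
    rewrite -(cat_take_drop j.-1 (greedy_row_prefix _ _ _ k.-1)) count_cat grp_take.
      exact: leq_addr.
    by rewrite -ltnS !prednK // ?(leq_trans Hj Hjk) // ltnW.
  - rewrite (eq_in_count (a2 := pred0)); first by rewrite count_pred0.
    by move=> x Hx; rewrite /= HP.
  - apply/hasPn => x Hx; apply/hasPn => y _.
    by rewrite HP // andbF.
by move/Hmin => /(_ Hfk); rewrite leqNgt Hlt.
Qed.
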